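(* Let $m$ be a divisor of $n$, $s=n/m$, $\alpha$ a primitive element of $\mathbb{F}_{q^n}$, $l$ an integer with $1\le l<\frac{q^n-1}{q^m-1}$, and $L$ the degree of the minimal polynomial of $\alpha^l$ over $\mathbb{F}_{q^m}$. Let $r\ge2$ and integers $1\le s_1<\dots<s_r\le L$ with $s_r<s$, and let $\mathcal{F}=(\mathcal{F}_1,\dots,\mathcal{F}_r)$ be the flag with $\mathcal{F}_i=\bigoplus_{j=0}^{s_i-1}\mathbb{F}_{q^m}\alpha^{lj}$ (of type $(ms_1,\dots,ms_r)$). Then $\mathrm{Orb}(\mathcal{F})$ has best friend $\mathbb{F}_{q^m}$ and $|\mathrm{Orb}(\mathcal{F})|=\frac{q^n-1}{q^m-1}$. Moreover: (1) If $s_r<L$, then $\mathrm{Orb}(\mathcal{F})$ is consistent and $d_f(\mathrm{Orb}(\mathcal{F}))=2mr$. (2) If $s_r=L$, then $d_f(\mathrm{Orb}(\mathcal{F}))=2m(r-1)$ and, with $c=\frac{q^n-1}{q^{mL}-1}$, $\mathrm{Orb}(\mathcal{F})$ is the disjoint union $\dot\bigcup_{i=0}^{c-1}\mathrm{Orb}_{\alpha^c}(\mathcal{F}\alpha^i)$.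
   Context: $q$ prime power; $\mathbb{F}_{q^n}$ is an $n$-dimensional $\mathbb{F}_q$-vector space; subspaces are $\mathbb{F}_q$-subspaces; $d_S(\mathcal{U},\mathcal{V})=\dim(\mathcal{U}+\mathcal{V})-\dim(\mathcal{U}\cap\mathcal{V})$. A flag is a chain $\{0\}\subsetneq\mathcal{F}_1\subsetneq\cdots\subsetneq\mathcal{F}_r\subsetneq\mathbb{F}_{q^n}$; $d_f(\mathcal{F},\mathcal{F}')=\sum_i d_S(\mathcal{F}_i,\mathcal{F}'_i)$; the minimum distance of a flag code is the minimum $d_f$ between distinct codewords. For $\beta\in\mathbb{F}_{q^n}^\ast$, $\mathcal{F}\beta=(\mathcal{F}_1\beta,\dots,\mathcal{F}_r\beta)$, $\mathrm{Orb}_\beta(\mathcal{F})=\{\mathcal{F}\beta^j:j\ge0\}$, and $\mathrm{Orb}(\mathcal{F})=\mathrm{Orb}_\alpha(\mathcal{F})$ for $\alpha$ primitive. The $i$-th projected code of a flag code $\mathcal{C}$ is $\mathcal{C}_i=\{\mathcal{F}_i:\mathcal{F}\in\mathcal{C}\}$. $\mathcal{C}$ is disjoint if $|\mathcal{C}_i|=|\mathcal{C}|$ for all $i$, and consistent if it is disjoint and $d_f(\mathcal{C})=\sum_i d_S(\mathcal{C}_i)$ (minimum subspace distances of the projected codes). A subfield $\mathbb{F}_{q^m}$ is a friend of a subspace if the subspace is an $\mathbb{F}_{q^m}$-vector space; a friend of a flag is a common friend of all its subspaces; the best friend is the largest friend (of a code $\mathrm{Orb}_\beta(\mathcal{F})$: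 that of $\mathcal{F}$). *)

(* Defs.v *)
(* F_q = F : finFieldType, F_{q^n} = L : fieldExtType F. *)
From HB Require Import structures.
From mathcomp Require Import all_boot all_order all_algebra all_field.
Set Implicit Arguments. Unset Strict Implicit. Unset Printing Implicit Defensive.
Import GRing.Theory.
Local Open Scope ring_scope.

Section FlagDefs.
Variables (F : finFieldType) (L : fieldExtType F).

Definition subspace_dist (U V : {vspace L}) : nat :=
  (\dim (U + V) - \dim (U :&: V))%N.

Definition flag := seq {vspace L}.

Definition is_flag (Fl : flag) : Prop :=
  sorted (fun U V : {vspace L} => ((U <= V)%VS && (U != V))) (0%VS :: rcons Fl fullv).

Definition flag_dist (Fl Fl' : flag) : nat :=
  (\sum_(i < size Fl) subspace_dist (nth 0%VS Fl i) (nth 0%VS Fl' i))%N.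

(* minimum distance of a code (list of codewords) w.r.t. a distance d:
   the minimum of d x y over pairs of distinct codewords (0 if there is
   no such pair) *)
Definition min_dist (T : eqType) (d : T -> T -> nat) (C : seq T) : nat :=
  let ds := [seq d p.1 p.2 | p <- [seq (x, y) | x <- C, y <- C] & p.1 != p.2] in
  if ds is a :: t then foldr minn a t else 0%N.

Definition flag_mul (Fl : flag) (b : L) : flag :=
  [seq (U * <[b]>)%VS | U <- Fl].

(* Orb_beta(F) = { F beta^j : j >= 0 }, as a duplicate-free list.
   For beta <> 0 in F_{q^n}, beta^(q^n - 1) = 1, so j < q^n - 1 suffices. *)
Definition Orb (b : L) (Fl : flag) : seq flag :=
  undup [seq flag_mul Fl (b ^+ j) | j <- iota 0 (#|F| ^ \dim {: L}).-1].

(* i-th projected code (indices start at 0) *)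
Definition proj_code (C : seq flag) (i : nat) : seq {vspace L} :=
  undup [seq nth 0%VS Fl i | Fl <- C].

Definition flag_code_disjoint (C : seq flag) (r : nat) : Prop :=
  forall i, (i < r)%N -> size (proj_code C i) = size (undup C).

Definition flag_code_consistent (C : seq flag) (r : nat) : Prop :=
  flag_code_disjoint C r /\
  min_dist flag_dist C =
    (\sum_(i < r) min_dist subspace_dist (proj_code C i))%N.

(* K is a friend of the subspace U: U is a K-vector space *)
Definition friend_sub (K : {subfield L}) (U : {vspace L}) : bool :=
  (K * U <= U)%VS.

Definition friend_flag (K : {subfield L}) (Fl : flag) : bool :=
  all (friend_sub K) Fl.

Definition best_friend (K : {subfield L}) (Fl : flag) : Prop :=
  friend_flag K Fl /\
  forall K' : {subfield L}, friend_flag K' Fl -> (\dim K' <= \dim K)%N.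

Definition theflag (K : {subfield L}) (a : L) (l : nat) (s : seq nat) : flag :=
  [seq (\sum_(j < si) (K * <[a ^+ (l * j)]>)%VS)%VS | si <- s].

End FlagDefs.

(* Main.v *)
Require Import Defs.
From HB Require Import structures.
From mathcomp Require Import all_boot all_order all_algebra all_field.
From mathcomp Require Import zify.
Import GRing.Theory.
Local Open Scope ring_scope.
Local Open Scope nat_scope.
Lemma pred_dvd_pow x k : (0 < x) -> (x.-1 %| (x ^ k).-1).
Proof.
move=> x0; elim: k => [|k IH]; first by rewrite expn0 dvdn0.
have hk : 0 < x ^ k by rewrite expn_gt0 x0.
have -> : (x ^ k.+1).-1 = x * (x ^ k).-1 + x.-1.
  rewrite expnS; move: (x ^ k) hk => y hy; nia.
by rewrite dvdn_add // dvdn_mull.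
Qed.
Lemma pow_pred_dvd x a b : 0 < x -> a %| b -> (x ^ a).-1 %| (x ^ b).-1.
Proof.
move=> x0 /dvdnP[k ->]; rewrite mulnC expnM; apply: pred_dvd_pow.
by rewrite expn_gt0 x0.
Qed.
Lemma size_undup_eq (T : eqType) (s1 s2 : seq T) : s1 =i s2 -> size (undup s1) = size (undup s2).
Proof.
move=> e; apply: perm_size; apply: uniq_perm; rewrite ?undup_uniq // => x.
by rewrite !mem_undup.
Qed.

Lemma map_undup_mem (T1 T2 : eqType) (f : T1 -> T2) (s : seq T1) :
  [seq f x | x <- undup s] =i [seq f x | x <- s].
Proof.
move=> y; apply/mapP/mapP => [[x hx ->]|[x hx ->]]; exists x => //.
  by rewrite -mem_undup. by rewrite mem_undup.
Qed.

Lemma undup_mod (T : eqType) (H : nat -> T) N M : 0 < N -> N <= M ->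
  (forall i j, H i = H j <-> i = j %[mod N]) ->
  undup [seq H j | j <- iota 0 M] =i [seq H j | j <- iota 0 N] /\
  size (undup [seq H j | j <- iota 0 M]) = N.
Proof.
move=> N0 NM hH.
have E : undup [seq H j | j <- iota 0 M] =i [seq H j | j <- iota 0 N].
  move=> x; rewrite mem_undup; apply/mapP/mapP => [[j hj ->]|[j hj ->]].
    exists (j %% N); first by rewrite mem_iota add0n ltn_mod N0.
    by apply/hH; rewrite modn_mod.
  exists j => //; move: hj; rewrite !mem_iota !add0n => hj; exact: leq_trans hj NM.
split=> //.
have U : uniq [seq H j | j <- iota 0 N].
  rewrite map_inj_in_uniq ?iota_uniq // => i j; rewrite !mem_iota !add0n => hi hj.
  by move/hH; rewrite !modn_small.
rewrite (perm_size (uniq_perm (undup_uniq _) U E)) size_map size_iota //.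
Qed.

Lemma foldr_minn_ge k a t : k <= a -> all (fun x => k <= x) t -> k <= foldr minn a t.
Proof.
move=> ha; elim: t => //= x t IH /andP[hx ht]; by rewrite leq_min hx IH.
Qed.

Lemma foldr_minn_le a t x : x \in a :: t -> foldr minn a t <= x.
Proof.
elim: t x => [|y t IH] x; first by rewrite inE => /eqP ->.
rewrite /= !inE geq_min => /or3P[/eqP->|/eqP->|hx].
- by apply/orP; right; apply: IH; rewrite mem_head.
- by rewrite leqnn.
- by apply/orP; right; apply: IH; rewrite inE hx orbT.
Qed.

Lemma min_distP (T : eqType) (dd : T -> T -> nat) (C : seq T) k :
  (forall x y, x \in C -> y \in C -> x != y -> k <= dd x y) ->
  (exists x y, [/\ x \in C, y \in C, x != y & dd x y = k]) ->
  min_dist dd C = k.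
Proof.
move=> hge [x [y [hx hy hxy hk]]]; rewrite /min_dist.
set ds := [seq _ | _ <- _ & _].
have memds : forall z, z \in ds -> k <= z.
  move=> z /mapP[[x' y'] /=]; rewrite mem_filter /= => /andP[hne /allpairsP[[x'' y''] /= [h1 h2 e]]] ->.
  by move: hne; case: e => -> -> hne; apply: hge.
have kin : k \in ds.
  apply/mapP; exists (x, y) => //; rewrite mem_filter /= hxy /=.
  by apply/allpairsP; exists (x, y).
case: ds memds kin => [//|a t] memds kin.
apply/eqP; rewrite eqn_leq foldr_minn_le //=.
apply: foldr_minn_ge; first by apply: memds; rewrite mem_head.
by apply/allP => z hz; apply: memds; rewrite inE hz orbT.
Qed.

Lemma sorted_props (s : seq nat) t : sorted ltn s -> t < size s ->
  [/\ head 0 s <= nth 0 s t, nth 0 s t <= last 0 s & (t.+1 < size s -> nth 0 s t < last 0 s)].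
Proof.
move=> ss ts.
have hlt := sorted_ltn_nth ltn_trans 0 ss.
have hle := sorted_leq_nth leq_trans leqnn 0 (sub_sorted (fun x y => @ltnW x y) ss).
have [k hk] : exists k, size s = k.+1.
  by exists (size s).-1; rewrite prednK // (leq_ltn_trans _ ts).
rewrite -nth_last -nth0 hk /=; rewrite hk in ts hlt hle; split.
- by apply: hle => //.
- by apply: hle; rewrite ?inE //.
- move=> t1; apply: hlt; rewrite ?inE //.
Qed.

Lemma uniq_flatten_map (T1 T2 : eqType) (f : T1 -> seq T2) (xs : seq T1) :
  uniq xs -> (forall x, x \in xs -> uniq (f x)) ->
  (forall x y z, x \in xs -> y \in xs -> z \in f x -> z \in f y -> x = y) ->
  uniq (flatten (map f xs)).
Proof.
elim: xs => [//|x xs IH] /= /andP[xn ux] hu hd.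
rewrite cat_uniq hu ?mem_head //= IH //; last first.
- by move=> a b z ha hb; apply: hd; rewrite inE ?ha ?hb orbT.
- by move=> a ha; apply: hu; rewrite inE ha orbT.
rewrite andbT; apply/hasPn => z /flatten_mapP[y hy hzy]; apply/negP => hzx.
have e : x = y by apply: (hd x y z) => //; rewrite inE ?eqxx ?hy ?orbT.
by move: xn; rewrite e hy.
Qed.

Local Open Scope ring_scope.
Section VS.
Variables (F : finFieldType) (L : fieldExtType F).
Implicit Types (U V W : {vspace L}) (K : {subfield L}).
Lemma dvd_lt_add m a b : (m %| a)%N -> (m %| b)%N -> (a < b)%N -> (a + m <= b)%N.
Proof.
move=> /dvdnP[a' ->] /dvdnP[b' ->] h.
case: m h => [|m] h; first by rewrite !muln0 in h.
have h1: (a' < b')%N by rewrite ltn_pmul2r in h.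
nia.
Qed.
Lemma kmod_dist K V W : (K * V <= V)%VS -> (K * W <= W)%VS ->
  \dim V = \dim W -> V != W ->
  (2 * \dim K <= subspace_dist V W)%N /\
  ((\dim (V + W) <= \dim V + \dim K)%N -> subspace_dist V W = 2 * \dim K)%N.
Proof.
move=> hV hW hd hne.
have hS : (K * (V + W) <= V + W)%VS by rewrite prodvDr addvS.
have lt : (\dim V < \dim (V + W))%N.
  rewrite ltnNge; apply: contra hne => h.
  have e1 : (V + W)%VS = V.
    by apply/eqP; rewrite eq_sym eqEdim addvSl.
  have : (W <= V)%VS by rewrite -e1 addvSr.
  by move=> sWV; apply/eqP/esym/eqP; rewrite eqEdim sWV hd leqnn.
have hge := @dvd_lt_add _ _ _ (field_module_dimS hV) (field_module_dimS hS) lt.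
have sc := dimv_sum_cap V W.
rewrite /subspace_dist; move: hge sc hd.
move: (\dim (V + W)) (\dim (V :&: W)) (\dim V) (\dim W) (\dim K) => a b c d e.
move=> *; split; lia.
Qed.
Definition Uk (K : {subfield L}) (a : L) (l k : nat) : {vspace L} :=
  (\sum_(j < k) (K * <[a ^+ (l * j)]>)%VS)%VS.

Section U.
Variables (K : {subfield L}) (a : L) (l : nat).
Local Notation b := (a ^+ l).
Local Notation U := (Uk K a l).
Local Notation d := (adjoin_degree K b).

Lemma U_kmod k : (K * U k <= U k)%VS.
Proof.
rewrite /Uk big_distrr /=; apply/subv_sumP => j _.
by rewrite prodvA prodv_id (sumv_sup j).
Qed.

Lemma U_rec k : U k.+1 = (U k + K * <[b ^+ k]>)%VS.
Proof. by rewrite /Uk big_ord_recr /= exprM. Qed.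

Lemma U_shift k : (U k * <[b]> <= U k.+1)%VS.
Proof.
rewrite /Uk big_distrl /= big_ord_recl /=; apply/subv_sumP => j _.
apply: subv_trans (addvSr _ _).
rewrite -prodvA prodv_line -exprD addnC -mulnS.
apply: (sumv_sup j) => //; by rewrite /bump leq0n add1n.
Qed.

Lemma U_dim_line x : (\dim (K * <[x]>) <= \dim K)%N.
Proof.
apply: leq_trans (dim_prodv _ _) _; rewrite dim_vline.
by case: (x != 0); rewrite ?muln1 ?muln0.
Qed.

Lemma U_dim_rel k k' : (k <= k')%N -> (\dim (U k') <= \dim (U k) + (k' - k) * \dim K)%N.
Proof.
move=> kk; rewrite -{1}(subnK kk); elim: (k' - k)%N => [|i IH].
  by rewrite add0n mul0n addn0.
rewrite addSn U_rec.
have h1 := dimv_add_leqif (U (i + k)) (K * <[b ^+ (i + k)]>).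
have h2 := U_dim_line (b ^+ (i + k)).
move: (h1.1) IH h2; rewrite mulSn.
move: (\dim _) (\dim _) (\dim _) (\dim _) (\dim _) => x y z w v; lia.
Qed.

Lemma U_full : U d = <<K; b>>%VS.
Proof.
rewrite Fadjoin_eq_sum /Fadjoin_sum /Uk; apply: eq_bigr => j _; by rewrite exprM.
Qed.

Lemma U_dim_le k : (\dim (U k) <= k * \dim K)%N.
Proof.
have := @U_dim_rel _ _ (leq0n k); rewrite subn0 /Uk big_ord0 dimv0 add0n; exact.
Qed.

Lemma U_dim k : (k <= d)%N -> \dim (U k) = (k * \dim K)%N.
Proof.
move=> kd; apply/eqP; rewrite eqn_leq U_dim_le /=.
have := @U_dim_rel _ _ kd; rewrite U_full dim_Fadjoin mulnBl.
have := leq_pmul2r (adim_gt0 K) (n1:=k) (n2:=d); rewrite kd => /esym h.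
move: h; move: (\dim (U k)) (\dim K) (adjoin_degree K b) => x y z h H; nia.
Qed.
Lemma U0 : U 0 = 0%VS.
Proof. by rewrite /Uk big_ord0. Qed.

Lemma U1 : U 1 = K.
Proof. by rewrite U_rec U0 add0v expr0 prodv1. Qed.

Lemma U_mono k : (U k <= U k.+1)%VS.
Proof. by rewrite U_rec addvSl. Qed.

Lemma U_stab k x : (0 < k)%N -> (k < d)%N ->
  (forall u, u \in U k -> x * u \in U k) -> x \in K.
Proof.
elim: k x => [//|k IH] x _ kd hx.
case: k IH kd hx => [|k] IH kd hx.
  by rewrite -U1 -[x]mulr1 hx // U1 mem1v.
have bnz : b != 0.
  apply: contraTneq kd => ->; by rewrite adjoin0_deg.
apply: (IH x) => // [|u hu]; first exact: ltnW.
set V := U k.+2; set W := (V * <[b]>)%VS; set C := (U k.+1 * <[b]>)%VS.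
have CV : (C <= V)%VS by apply: U_shift.
have CW : (C <= W)%VS by apply: prodvSl; apply: U_mono.
have VW3 : (U k.+3 <= V + W)%VS.
  rewrite U_rec addvS //= /W /V U_rec prodvDl -prodvA prodv_line -exprSr.
  exact: addvSr.
have dC : \dim C = (k.+1 * \dim K)%N by rewrite dim_cosetv // U_dim // ltnW // ltnW.
have dV : \dim V = (k.+2 * \dim K)%N by rewrite U_dim // ltnW.
have dW : \dim W = (k.+2 * \dim K)%N by rewrite dim_cosetv // dV.
have d3 : \dim (U k.+3) = (k.+3 * \dim K)%N by rewrite U_dim.
have eC : C = (V :&: W)%VS.
  apply/eqP; rewrite eqEdim subv_cap CV CW /=.
  have := dimv_sum_cap V W; have := dimvS VW3.
  rewrite dC dV dW d3; move: (\dim (V + W)) (\dim (V :&: W)) (\dim K) => y z w.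
  nia.
have h1 : x * (u * b) \in V by apply: hx; rewrite (subvP CV) // memv_mul // memv_line.
have h2 : x * u * b \in W by rewrite memv_mul ?memv_line // hx // (subvP (U_mono _)).
have : x * u * b \in C by rewrite eC memv_cap h2 -mulrA h1.
by case/memv_cosetP => w hw /mulIf -> //.
Qed.
End U.
Lemma cosM (U : {vspace L}) x y : ((U * <[x]>) * <[y]>)%VS = (U * <[x * y]>)%VS.
Proof. by rewrite -prodvA prodv_line. Qed.
Section Alpha.
Variables (q n m : nat) (K : {subfield L}) (alpha : L) (l : nat).
Hypotheses (hq : #|F| = q) (hn : \dim {: L} = n) (hK : \dim K = m) (hmn : (m %| n)%N)
  (halpha : (q ^ n).-1.-primitive_root alpha).
Local Notation M := ((q ^ n).-1).
Local Notation N := (((q ^ n).-1 %/ (q ^ m).-1)%N).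

Lemma q_gt1 : (1 < q)%N.
Proof. by rewrite -hq finNzRing_gt1. Qed.
Lemma m_gt0 : (0 < m)%N.
Proof. by rewrite -hK adim_gt0. Qed.
Lemma n_gt0 : (0 < n)%N.
Proof. by rewrite -hn (leq_trans m_gt0) // -hK dimvS // subvf. Qed.
Lemma qm_gt0 : (0 < (q ^ m).-1)%N.
Proof.
have h1 := q_gt1; have h2 : (0 < q ^ m)%N by rewrite expn_gt0 ltnW.
have := m_gt0; case: (m) h2 => // m' h2 _; rewrite expnS in h2 *.
move: (q ^ m')%N h2 => y hy; rewrite -subn1; have : (0 < y)%N by move: hy; rewrite muln_gt0 => /andP[]. 
move=> y0; nia.
Qed.
Lemma M_gt0 : (0 < M)%N.
Proof. exact: prim_order_gt0 halpha. Qed.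
Lemma M_eq : M = (N * (q ^ m).-1)%N.
Proof. rewrite divnK //; apply: pow_pred_dvd => //; exact: ltnW q_gt1. Qed.
Lemma N_gt0 : (0 < N)%N.
Proof. by move: M_gt0; rewrite {1}M_eq muln_gt0 => /andP[]. Qed.
Lemma N_le : (N <= M)%N.
Proof. by rewrite {2}M_eq leq_pmulr // qm_gt0. Qed.
Lemma alpha_nz : alpha != 0.
Proof.
apply/negP=> /eqP a0; have := prim_expr_order halpha; rewrite a0 expr0n.
have := M_gt0; case: M => // k _ /eqP; by rewrite eq_sym oner_eq0.
Qed.

Lemma alphaK j : (alpha ^+ j \in K) = (N %| j)%N.
Proof.
rewrite Fermat's_little_theorem hq hK -exprM (eq_prim_root_expr halpha).
rewrite eqn_mod_dvd; last by rewrite leq_pmulr // expn_gt0 ltnW // q_gt1.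
have -> : (j * q ^ m - j = j * (q ^ m).-1)%N by rewrite -subn1 mulnBr muln1.
by rewrite {1}M_eq (dvdn_pmul2r qm_gt0).
Qed.
Local Notation d := (adjoin_degree K (alpha ^+ l)).
Local Notation U := (Uk K alpha l).

Lemma kmod_absorb V x : (K * V <= V)%VS -> x \in K -> x != 0 -> (V * <[x]>)%VS = V.
Proof.
move=> hV xK xnz; apply/eqP; rewrite eqEdim dim_cosetv // leqnn andbT.
apply: subv_trans hV; rewrite prodvC; apply: prodvSl; by rewrite -memvE.
Qed.

Lemma cos_mod_eq V i j : (K * V <= V)%VS -> i = j %[mod N] ->
  (V * <[alpha ^+ i]>)%VS = (V * <[alpha ^+ j]>)%VS.
Proof.
move=> hV; wlog ij : i j / (i <= j)%N.
  move=> H; case: (leqP i j) => [/H//|/ltnW ji /esym e]; by rewrite (H j i).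
move=> /eqP; rewrite eq_sym eqn_mod_dvd // -alphaK => hK'.
rewrite -(subnK ij) exprD -cosM (@kmod_absorb V (alpha ^+ (j - i))) //; exact: expf_neq0 alpha_nz.
Qed.

Lemma cos_eq_mod k i j : (0 < k)%N -> (k < d)%N ->
  (U k * <[alpha ^+ i]>)%VS = (U k * <[alpha ^+ j]>)%VS -> i = j %[mod N].
Proof.
move=> k0 kd; wlog ij : i j / (i <= j)%N.
  move=> H; case: (leqP i j) => [/H//|/ltnW ji /esym e]; by rewrite (H j i).
move=> e; apply/eqP; rewrite eq_sym eqn_mod_dvd // -alphaK.
apply: (@U_stab K alpha l k _ k0 kd) => u hu.
have ai : alpha ^+ i != 0 by exact: expf_neq0 alpha_nz.
have : u * alpha ^+ i * alpha ^+ (j - i) \in (U k * <[alpha ^+ j]>)%VS.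
  by rewrite -mulrA -exprD subnKC // memv_mul // memv_line.
rewrite -e => /memv_cosetP[w hw].
rewrite mulrC mulrA => /mulIf; rewrite mulrC => -> //.
Qed.

Local Notation G s j := (flag_mul (theflag K alpha l s) (alpha ^+ j)).

Lemma G_def s j : G s j = [seq (U k * <[alpha ^+ j]>)%VS | k <- s].
Proof. by rewrite /flag_mul /theflag -map_comp. Qed.

Lemma size_G s j : size (G s j) = size s.
Proof. by rewrite G_def size_map. Qed.

Lemma G_nth s j t : (t < size s)%N -> nth 0%VS (G s j) t = (U (nth 0%N s t) * <[alpha ^+ j]>)%VS.
Proof. by move=> ts; rewrite G_def (nth_map 0%N). Qed.

Lemma G_mod s i j : i = j %[mod N] -> G s i = G s j.
Proof.
move=> e; rewrite !G_def; apply: eq_map => k; apply: cos_mod_eq => //; exact: U_kmod.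
Qed.

Lemma G_eq s i j : (0 < head 0%N s)%N -> (head 0%N s < d)%N ->
  G s i = G s j <-> i = j %[mod N].
Proof.
move=> h0 hd; split; last exact: G_mod.
case: s h0 hd => [//|k s] /= h0 hd; rewrite !G_def /= => -[e _].
exact: cos_eq_mod e.
Qed.

Lemma cos_kmod k j : (K * (U k * <[alpha ^+ j]>) <= U k * <[alpha ^+ j]>)%VS.
Proof. by rewrite prodvA prodvSl // U_kmod. Qed.

Lemma mem_Orb (b : L) (Fl : flag L) (X : flag L) : reflect (exists2 j, (j < M)%N & X = flag_mul Fl (b ^+ j)) (X \in Orb b Fl).
Proof.
rewrite /Orb mem_undup hq hn; apply: (iffP mapP) => [[j hj ->]|[j hj ->]]; exists j => //.
  by move: hj; rewrite mem_iota.
by rewrite mem_iota.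
Qed.

Lemma qpow_gt0 k : (0 < k)%N -> (0 < (q ^ k).-1)%N.
Proof.
have h1 := q_gt1; have h2 : (0 < q ^ k)%N by rewrite expn_gt0 ltnW.
case: k h2 => // k' h2 _; rewrite expnS in h2 *.
move: (q ^ k')%N h2 => y hy; rewrite -subn1; have : (0 < y)%N by move: hy; rewrite muln_gt0 => /andP[].
move=> y0; nia.
Qed.

Lemma flag_mulM (Fl : flag L) x y : flag_mul (flag_mul Fl x) y = flag_mul Fl (x * y).
Proof. by rewrite /flag_mul -map_comp; apply: eq_map => V /=; rewrite cosM. Qed.

Lemma G_modM s j : G s (j %% M) = G s j.
Proof. by rewrite (prim_expr_mod halpha). Qed.

Lemma dist_comp k i j : (0 < k)%N -> (k < d)%N -> ~ (i = j %[mod N]) ->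
  (2 * m <= subspace_dist (U k * <[alpha ^+ i]>) (U k * <[alpha ^+ j]>))%N.
Proof.
move=> k0 kd hij; rewrite -hK.
have hd : \dim (U k * <[alpha ^+ i]>) = \dim (U k * <[alpha ^+ j]>).
  by rewrite !dim_cosetv // expf_neq0 // alpha_nz.
have hne : (U k * <[alpha ^+ i]>)%VS != (U k * <[alpha ^+ j]>)%VS.
  by apply/eqP => e; apply: hij; exact: cos_eq_mod e.
by have [E _] := @kmod_dist K _ _ (cos_kmod _ _) (cos_kmod _ _) hd hne.
Qed.

Lemma l_not_mod : (0 < l)%N -> (l < N)%N -> ~ (0 = l %[mod N]).
Proof. move=> l0 lN; rewrite mod0n modn_small // => e; by rewrite -e in l0. Qed.

Lemma dist_comp_l k : (0 < k)%N -> (k < d)%N -> (0 < l)%N -> (l < N)%N ->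
  subspace_dist (U k * <[alpha ^+ 0]>) (U k * <[alpha ^+ l]>) = (2 * m)%N.
Proof.
move=> k0 kd l0 lN; rewrite -hK.
have hd : \dim (U k * <[alpha ^+ 0]>) = \dim (U k * <[alpha ^+ l]>).
  by rewrite !dim_cosetv // expf_neq0 // alpha_nz.
have hne : (U k * <[alpha ^+ 0]>)%VS != (U k * <[alpha ^+ l]>)%VS.
  by apply/eqP => e; apply: (l_not_mod l0 lN); exact: cos_eq_mod e.
have [_ E] := @kmod_dist K _ _ (cos_kmod _ _) (cos_kmod _ _) hd hne.
apply: E.
have hsub : (U k * <[alpha ^+ 0]> + U k * <[alpha ^+ l]> <= U k.+1)%VS.
  by rewrite subv_add expr0 prodv1 U_mono U_shift.
have := dimvS hsub; rewrite (@U_dim K alpha l k.+1 kd) expr0 prodv1 (@U_dim K alpha l k (ltnW kd)) mulSn.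
move: (\dim (_ + _)) (k * \dim K)%N (\dim K) => x y z; lia.
Qed.

Lemma U_top_fix x : x \in <<K; alpha ^+ l>>%VS -> x != 0 -> (U d * <[x]>)%VS = U d.
Proof.
move=> hx xnz; rewrite U_full; apply/eqP; rewrite eqEdim dim_cosetv // leqnn andbT.
by apply: prodv_sub => //; rewrite -memvE.
Qed.

Lemma dist_comp_top : subspace_dist (U d * <[alpha ^+ 0]>) (U d * <[alpha ^+ l]>) = 0%N.
Proof.
rewrite expr0 prodv1 U_top_fix ?memv_adjoin ?expf_neq0 ?alpha_nz //.
by rewrite /subspace_dist addvv capvv subnn.
Qed.

Lemma mem_projP s t X : (t < size s)%N ->
  reflect (exists2 j, (j < M)%N & X = (U (nth 0%N s t) * <[alpha ^+ j]>)%VS)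
          (X \in proj_code (Orb alpha (theflag K alpha l s)) t).
Proof.
move=> ts; rewrite /proj_code mem_undup; apply: (iffP mapP).
  by move=> [Y /mem_Orb[j hj ->] ->]; exists j => //; rewrite G_nth.
move=> [j hj ->]; exists (G s j); first by apply/mem_Orb; exists j.
by rewrite G_nth.
Qed.

Lemma min_dist_proj s t : (t < size s)%N -> (0 < nth 0%N s t)%N -> (nth 0%N s t < d)%N ->
  (0 < l)%N -> (l < N)%N ->
  min_dist (@subspace_dist F L) (proj_code (Orb alpha (theflag K alpha l s)) t) = (2 * m)%N.
Proof.
move=> ts k0 kd l0 lN; apply: min_distP.
  move=> X Y /(mem_projP _ _ _ ts)[i _ ->] /(mem_projP _ _ _ ts)[j _ ->] hne.
  apply: dist_comp => // e; move/eqP: hne; apply.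
  by apply: cos_mod_eq => //; exact: U_kmod.
exists (U (nth 0%N s t) * <[alpha ^+ 0]>)%VS, (U (nth 0%N s t) * <[alpha ^+ l]>)%VS.
have hlM : (l < M)%N := leq_trans lN N_le.
split.
- by apply/(mem_projP _ _ _ ts); exists 0%N => //; exact: M_gt0.
- by apply/(mem_projP _ _ _ ts); exists l.
- by apply/eqP => e; apply: (l_not_mod l0 lN); exact: cos_eq_mod e.
- exact: dist_comp_l.
Qed.

Lemma main_sec (hl1 : (1 <= l)%N) (hl2 : (l < (q ^ n).-1 %/ (q ^ m).-1)%N)
  (Ldeg : nat) (hLdeg : Ldeg = (size (minPoly K (alpha ^+ l))).-1)
  (r : nat) (hr : (2 <= r)%N)
  (s : seq nat) (hs_size : size s = r) (hs_sorted : sorted ltn s)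
  (hs1 : (1 <= head 0%N s)%N) (hsL : (last 0%N s <= Ldeg)%N) :
  let Fl := theflag K alpha l s in
  best_friend K Fl /\
  size (Orb alpha Fl) = ((q ^ n).-1 %/ (q ^ m).-1)%N /\
  ((last 0%N s < Ldeg)%N ->
     flag_code_consistent (Orb alpha Fl) r /\
     min_dist (@flag_dist F L) (Orb alpha Fl) = (2 * m * r)%N) /\
  (last 0%N s = Ldeg ->
     let c := ((q ^ n).-1 %/ (q ^ (m * Ldeg)).-1)%N in
     min_dist (@flag_dist F L) (Orb alpha Fl) = (2 * m * (r - 1))%N /\
     uniq (flatten [seq Orb (alpha ^+ c) (flag_mul Fl (alpha ^+ i)) | i <- iota 0 c]) /\
     Orb alpha Fl =i
       flatten [seq Orb (alpha ^+ c) (flag_mul Fl (alpha ^+ i)) | i <- iota 0 c]).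
Proof.
move=> Fl.
have Ld : Ldeg = d by rewrite hLdeg size_minPoly.
rewrite {}Ld in hsL *; clear hLdeg.
have sp t : (t < r)%N ->
    [/\ (0 < nth 0%N s t)%N, (nth 0%N s t <= d)%N & ((t.+1 < r)%N -> (nth 0%N s t < d)%N)].
  move=> tr; have ts : (t < size s)%N by rewrite hs_size.
  have [h1 h2 h3] := @sorted_props s t hs_sorted ts; split.
  - exact: leq_trans hs1 h1.
  - exact: leq_trans h2 hsL.
  - by move=> t1; apply: leq_trans (h3 _) hsL; rewrite hs_size.
have [h0 hd0] : (0 < head 0%N s)%N /\ (head 0%N s < d)%N.
  have [a b c] := sp 0%N (ltnW hr); rewrite -nth0; split => //; exact: c.
have hGeq i j := G_eq s i j h0 hd0.
have hOrb : Orb alpha Fl = undup [seq G s j | j <- iota 0 M] by rewrite /Orb hq hn.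
have hlM : (l < M)%N := leq_trans hl2 N_le.
have hOrbX X : X \in Orb alpha Fl -> exists j, (j < M)%N /\ X = G s j.
  by move=> /mem_Orb[j hj ->]; exists j.
have G0in : G s 0 \in Orb alpha Fl by apply/mem_Orb; exists 0%N => //; exact: M_gt0.
have Glin : G s l \in Orb alpha Fl by apply/mem_Orb; exists l.
have G0l : G s 0 != G s l.
  by apply/eqP => /hGeq; apply: l_not_mod.
have distG i j : flag_dist (G s i) (G s j) =
    (\sum_(t < r) subspace_dist (U (nth 0%N s t) * <[alpha ^+ i]>) (U (nth 0%N s t) * <[alpha ^+ j]>))%N.
  rewrite /flag_dist size_G hs_size; apply: eq_bigr => t _.
  by rewrite !G_nth // hs_size.
have compLow i j (t : 'I_r) : G s i != G s j -> (nth 0%N s t < d)%N ->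
    (2 * m <= subspace_dist (U (nth 0%N s t) * <[alpha ^+ i]>) (U (nth 0%N s t) * <[alpha ^+ j]>))%N.
  move=> hne kd; have [k0 _ _] := sp t (ltn_ord t).
  apply: dist_comp => // e; move/eqP: hne; apply; exact/hGeq.
have hsize : size (Orb alpha Fl) = N.
  rewrite hOrb; exact: (proj2 (@undup_mod _ _ _ _ N_gt0 N_le hGeq)).
split.
  split; first by apply/allP => V /mapP[k _ ->]; exact: U_kmod.
  move=> K' /allP hK'.
  have hs0 : s = head 0%N s :: behead s by case: (s) hs_size hr => [<-|].
  have : friend_sub K' (U (head 0%N s)).
    by apply: hK'; apply/mapP; exists (head 0%N s) => //; rewrite {2}hs0 mem_head.
  move=> /prodvP hst; apply: dimvS; apply/subvP => x hx.
  by apply: (@U_stab K alpha l _ _ h0 hd0) => u hu; apply: hst.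
split; first exact: hsize.
split.
  move=> hlast.
  have kd t : (t < r)%N -> (nth 0%N s t < d)%N.
    move=> tr; have ts : (t < size s)%N by rewrite hs_size.
    by have [_ h2 _] := @sorted_props s t hs_sorted ts; exact: leq_ltn_trans h2 hlast.
  have md : min_dist (@flag_dist F L) (Orb alpha Fl) = (2 * m * r)%N.
    apply: min_distP.
      move=> X Y /hOrbX[i [_ ->]] /hOrbX[j [_ ->]] hne; rewrite distG.
      have H := @leq_sum _ (index_enum 'I_r) (fun _ => true) (fun _ => 2 * m)%N _ (fun (t : 'I_r) _ => compLow i j t hne (kd t (ltn_ord t))).
      by rewrite sum_nat_const card_ord mulnC in H.
    exists (G s 0), (G s l); split => //; rewrite distG.
    rewrite (eq_bigr (fun _ => 2 * m)%N) ?sum_nat_const ?card_ord ?(mulnC r) // => t _.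
    have [k0 _ _] := sp t (ltn_ord t).
    exact: dist_comp_l (kd t (ltn_ord t)) hl1 hl2.
  split => //; split.
    move=> t tr; rewrite (undup_id (undup_uniq _)) hsize /proj_code hOrb.
    rewrite (@size_undup_eq _ _ _ (@map_undup_mem _ _ _ _)) -map_comp.
    apply: (proj2 (@undup_mod _ (fun j => nth 0%VS (G s j) t) _ _ N_gt0 N_le _)) => i j.
    have ts : (t < size s)%N by rewrite hs_size.
    have [k0 _ _] := sp t tr.
    rewrite !G_nth //; split; first exact: cos_eq_mod (kd t tr).
    by move=> e; rewrite (@cos_mod_eq _ _ _ (U_kmod K alpha l _) e).
  rewrite md (eq_bigr (fun _ => 2 * m)%N) ?sum_nat_const ?card_ord ?(mulnC r) // => t _.
  have ts : (t < size s)%N by rewrite hs_size.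
  have [k0 _ _] := sp t (ltn_ord t).
  exact: min_dist_proj ts k0 (kd t (ltn_ord t)) hl1 hl2.
move=> hlast c.
have [r' hr'] : exists r', r = r'.+1 by exists r.-1; rewrite prednK // ltnW.
rewrite hr' in sp compLow distG hs_size *.
have kd' t : (t < r')%N -> (nth 0%N s t < d)%N.
  by move=> tr; have [_ _ h] := sp t (ltnW tr); apply: h.
have top : nth 0%N s r' = d by rewrite -hlast -nth_last hs_size.
have hmd : (m * d %| n)%N.
  by rewrite -hn -hK mulnC -dim_Fadjoin field_dimS // subvf.
have he : ((q ^ (m * d)).-1 %| M)%N by apply: pow_pred_dvd => //; exact: ltnW q_gt1.
have e0 : (0 < (q ^ (m * d)).-1)%N.
  by apply: qpow_gt0; rewrite muln_gt0 m_gt0.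
have hc0 : (0 < c)%N by rewrite /c divn_gt0 // dvdn_leq // M_gt0.
have hcN : (c %| N)%N.
  have [f hf] : exists f, (q ^ (m * d)).-1 = (f * (q ^ m).-1)%N.
    by apply/dvdnP; apply: pow_pred_dvd; [exact: ltnW q_gt1 | exact: dvdn_mulr].
  have hM : M = (c * f * (q ^ m).-1)%N by rewrite -mulnA -hf /c divnK.
  have : (N * (q ^ m).-1 = c * f * (q ^ m).-1)%N by rewrite -M_eq.
  move/eqP; rewrite eqn_pmul2r ?qm_gt0 // => /eqP ->; exact: dvdn_mulr.
have memOc i X : X \in Orb (alpha ^+ c) (G s i) -> exists j, X = G s (i + c * j).
  by move=> /mem_Orb[j _ ->]; exists j; rewrite flag_mulM -exprM -exprD.
split.
  apply: min_distP.
    move=> X Y /hOrbX[i [_ ->]] /hOrbX[j [_ ->]] hne; rewrite distG big_ord_recr /=.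
    apply: (leq_trans _ (leq_addr _ _)).
    have H := @leq_sum _ (index_enum 'I_r') (fun _ => true) (fun _ => 2 * m)%N _
      (fun (t : 'I_r') _ => compLow i j (widen_ord (leqnSn r') t) hne (kd' t (ltn_ord t))).
    by rewrite sum_nat_const card_ord mulnC in H; rewrite subn1 /=.
  exists (G s 0), (G s l); split => //; rewrite distG big_ord_recr /= top dist_comp_top addn0.
  rewrite subn1 /= (eq_bigr (fun _ => 2 * m)%N) ?sum_nat_const ?card_ord ?(mulnC r') // => t _.
  have [k0 _ _] := sp t (ltnW (ltn_ord t)).
  exact: dist_comp_l (kd' t (ltn_ord t)) hl1 hl2.
split.
  apply: uniq_flatten_map; first exact: iota_uniq.
    by move=> i _; exact: undup_uniq.
  move=> i i' X; rewrite !mem_iota !add0n => hi hi' /memOc[j ->] /memOc[j' /hGeq].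
  move=> /(congr1 (modn ^~ c)); rewrite !modn_dvdm // ![(_ + c * _)%N]addnC.
  by rewrite !(mulnC c) !modnMDl !modn_small.
move=> X; apply/idP/idP.
  move=> /mem_Orb[j hj ->]; apply/flatten_mapP; exists (j %% c)%N.
    by rewrite mem_iota add0n ltn_mod.
  apply/mem_Orb; exists (j %/ c)%N; first exact: leq_ltn_trans (leq_div j c) hj.
  by rewrite flag_mulM -exprM -exprD addnC mulnC -divn_eq.
move=> /flatten_mapP[i _ /memOc[j ->]]; rewrite -G_modM; apply/mem_Orb.
by exists ((i + c * j) %% M)%N; first by rewrite ltn_mod M_gt0.
Qed.
End Alpha.
End VS.
Theorem mainTheorem5 (F : finFieldType) (L : fieldExtType F)
  (q n m : nat) (hq : #|F| = q) (hn : \dim {: L} = n)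
  (K : {subfield L}) (hK : \dim K = m) (hmn : (m %| n)%N)
  (alpha : L) (halpha : (q ^ n).-1.-primitive_root alpha)
  (l : nat) (hl1 : (1 <= l)%N) (hl2 : (l < (q ^ n).-1 %/ (q ^ m).-1)%N)
  (Ldeg : nat) (hLdeg : Ldeg = (size (minPoly K (alpha ^+ l))).-1)
  (r : nat) (hr : (2 <= r)%N)
  (s : seq nat) (hs_size : size s = r) (hs_sorted : sorted ltn s)
  (hs1 : (1 <= head 0%N s)%N) (hsL : (last 0%N s <= Ldeg)%N)
  (hss : (last 0%N s < n %/ m)%N) :
  let Fl := theflag K alpha l s in
  best_friend K Fl /\
  size (Orb alpha Fl) = ((q ^ n).-1 %/ (q ^ m).-1)%N /\
  ((last 0%N s < Ldeg)%N ->
     flag_code_consistent (Orb alpha Fl) r /\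
     min_dist (@flag_dist F L) (Orb alpha Fl) = (2 * m * r)%N) /\
  (last 0%N s = Ldeg ->
     let c := ((q ^ n).-1 %/ (q ^ (m * Ldeg)).-1)%N in
     min_dist (@flag_dist F L) (Orb alpha Fl) = (2 * m * (r - 1))%N /\
     uniq (flatten [seq Orb (alpha ^+ c) (flag_mul Fl (alpha ^+ i)) | i <- iota 0 c]) /\
     Orb alpha Fl =i
       flatten [seq Orb (alpha ^+ c) (flag_mul Fl (alpha ^+ i)) | i <- iota 0 c]).
Proof.
exact: (@main_sec _ _ _ _ _ _ _ _ hq hn hK hmn halpha hl1 hl2 _ hLdeg _ hr _ hs_size hs_sorted hs1 hsL).
Qed.
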